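(* $u_2u_1u_2\subset U$.
   Context: Let $B_3=\langle s_1,s_2\mid s_1s_2s_1=s_2s_1s_2\rangle$, $R_4=\mathbb{Z}[a,b,c,d,d^{-1}]$, and let $H_4$ be the quotient of the group algebra $R_4B_3$ by the relations $s_i^4=as_i^3+bs_i^2+cs_i+d$ for $i=1,2$; identify $s_i$ with their images in $H_4$. For $i=1,2$ let $u_i$ be the $R_4$-subalgebra of $H_4$ generated by $s_i$. For $R_4$-submodules (or elements) $X_1,\dots,X_n$ of $H_4$, $X_1\cdots X_n$ denotes the $R_4$-submodule spanned by all products $x_1\cdots x_n$ with $x_j\in X_j$, and sums are sums of submodules. Define $U'=u_1u_2u_1+u_1s_2s_1^{-1}s_2u_1+u_1s_2^{-1}s_1s_2^{-1}u_1+u_1s_2^{-1}s_1^{-2}s_2^{-1}$ and $U=U'+u_1s_2s_1^{-2}s_2u_1+u_1s_2^{-2}s_1^{-2}s_2^{-2}u_1$. *)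

(* Defs.v *)
From mathcomp Require Import all_boot all_order all_algebra.
Set Implicit Arguments. Unset Strict Implicit. Unset Printing Implicit Defensive.
Import GRing.Theory.
Local Open Scope ring_scope.

Section Hecke.
Variables (R : comNzRingType) (A : unitAlgType R).

Definition in_span (S : A -> Prop) (x : A) : Prop :=
  exists (n : nat) (r : 'I_n -> R) (v : 'I_n -> A),
    (forall i, S (v i)) /\ x = \sum_(i < n) r i *: v i.

Definition subalg1 (s : A) : A -> Prop :=
  fun x => exists p : {poly R}, x = horner_alg s p.

(* generators of u_1 u_2 u_1, u_1 g u_1, u_1 g, u_2 u_1 u_2 *)
Definition prod3 (X Y Z : A -> Prop) : A -> Prop :=
  fun w => exists x y z, [/\ X x, Y y, Z z & w = x * y * z].
Definition sandwich (X : A -> Prop) (g : A) (Z : A -> Prop) : A -> Prop :=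
  fun w => exists x z, [/\ X x, Z z & w = x * g * z].
Definition left_mul (X : A -> Prop) (g : A) : A -> Prop :=
  fun w => exists x, X x /\ w = x * g.

(* generating set of U (sum of the six submodules in the definition of U) *)
Definition U_gens (s1 s2 : A) : A -> Prop :=
  let u1 := subalg1 s1 in let u2 := subalg1 s2 in
  fun w =>
    prod3 u1 u2 u1 w
    \/ sandwich u1 (s2 * s1^-1 * s2) u1 w
    \/ sandwich u1 (s2^-1 * s1 * s2^-1) u1 w
    \/ left_mul u1 (s2^-1 * s1^-2 * s2^-1) w
    \/ sandwich u1 (s2 * s1^-2 * s2) u1 w
    \/ sandwich u1 (s2^-2 * s1^-2 * s2^-2) u1 w.

Definition U_mod (s1 s2 : A) : A -> Prop := in_span (U_gens s1 s2).

Definition u2u1u2 (s1 s2 : A) : A -> Prop :=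
  in_span (prod3 (subalg1 s2) (subalg1 s1) (subalg1 s2)).
End Hecke.

(* Main.v *)
Require Import Defs.
From mathcomp Require Import all_boot all_order all_algebra.
From mathcomp Require Import zify.
Set Implicit Arguments. Unset Strict Implicit. Unset Printing Implicit Defensive.
Import Order.TTheory GRing.Theory Num.Theory.
Local Open Scope ring_scope.

Lemma cancel4 (V : zmodType) (X Y Z W : V) : X + Y + Z + W - X - Y - Z = W.
Proof. apply/eqP; rewrite !subr_eq; apply/eqP.
rewrite addrC -!addrA; congr (_ + _); by rewrite addrC (addrC Y) addrA. Qed.

Section Span.
Variables (R : comNzRingType) (A : unitAlgType R).

Definition subclosed (P : A -> Prop) :=
  [/\ P 0, (forall u v, P u -> P v -> P (u + v)) & (forall (k : R) u, P u -> P (k *: u))].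

Lemma span_sub (S : A -> Prop) x : S x -> in_span S x.
Proof.
move=> Sx; exists 1%N, (fun _ => 1), (fun _ => x); split=> //.
by rewrite big_ord1 scale1r.
Qed.

Lemma span_closed (S : A -> Prop) : subclosed (in_span S).
Proof.
split.
- exists 0%N, (fun _ => 0), (fun _ => 0); split; first by case.
  by rewrite big_ord0.
- move=> u v [n [r [f [Sf ->]]]] [m [r' [f' [Sf' ->]]]].
  exists (n + m)%N, (fun i => match split i with inl j => r j | inr j => r' j end),
    (fun i => match split i with inl j => f j | inr j => f' j end); split.
    by move=> i; case: (split i).
  rewrite big_split_ord /=; congr (_ + _); apply: eq_bigr => i _.
    by rewrite (unsplitK (inl _ i)).
  by rewrite (unsplitK (inr _ i)).
- move=> k u [n [r [f [Sf ->]]]]; exists n, (fun i => k * r i), f; split=> //.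
  by rewrite scaler_sumr; apply: eq_bigr => i _; rewrite scalerA.
Qed.

Lemma closedN P u : subclosed P -> P u -> P (- u).
Proof. by case=> _ _ HZ Pu; rewrite -scaleN1r; apply: HZ. Qed.

Lemma span_ind (S P : A -> Prop) : subclosed P -> (forall x, S x -> P x) ->
  forall w, in_span S w -> P w.
Proof.
case=> P0 PD PZ SP w [n [r [f [Sf ->]]]].
by elim/big_ind: _ => // i _; apply: (PZ); apply: SP.
Qed.

Lemma span_mono (S T : A -> Prop) : (forall x, S x -> T x) ->
  forall w, in_span S w -> in_span T w.
Proof.
move=> ST; apply: span_ind; first exact: span_closed.
by move=> x Sx; apply: span_sub; apply: ST.
Qed.

Lemma span_mul (S T : A -> Prop) p q :
  (forall x, S x -> in_span T (p * x * q)) ->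
  forall w, in_span S w -> in_span T (p * w * q).
Proof.
move=> H; have [T0 TD TZ] := span_closed T.
apply: (@span_ind S (fun w => in_span T (p * w * q))) => //.
split.
- by rewrite mulr0 mul0r.
- by move=> u v Hu Hv; rewrite mulrDr mulrDl; apply: TD.
- by move=> k u Hu; rewrite -scalerAr -scalerAl; apply: TZ.
Qed.

Lemma lin4 (p q : A) k1 k2 k3 k4 u1 u2 u3 u4 :
  p * (k1 *: u1 + k2 *: u2 + k3 *: u3 + k4 *: u4) * q =
  k1 *: (p * u1 * q) + k2 *: (p * u2 * q) + k3 *: (p * u3 * q) + k4 *: (p * u4 * q).
Proof. by rewrite !mulrDr !mulrDl -!scalerAr -!scalerAl. Qed.

Variables (a b c d e : R) (s : A).
Hypotheses (de : d * e = 1) (su : s \is a GRing.unit)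
  (quart : s ^+ 4 = a *: s ^+ 3 + b *: s ^+ 2 + c *: s + d%:A).

Lemma stepup z : s ^ (z + 4%:Z) = a *: s ^ (z + 3%:Z) + b *: s ^ (z + 2%:Z) + c *: s ^ (z + 1%:Z) + d *: s ^ z.
Proof.
rewrite !exprzDr //.
have -> : s ^ (4%:Z) = s ^+ 4 by [].
have -> : s ^ (3%:Z) = s ^+ 3 by [].
have -> : s ^ (2%:Z) = s ^+ 2 by [].
have -> : s ^ (1%:Z) = s by rewrite expr1z.
by rewrite quart !mulrDr -!scalerAr mulr1.
Qed.

Lemma stepdown z : s ^ (z - 1%:Z) = e *: (s ^ (z + 3%:Z) - a *: s ^ (z + 2%:Z) - b *: s ^ (z + 1%:Z) - c *: s ^ z).
Proof.
have := stepup (z - 1%:Z).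
have -> : z - 1%:Z + 4%:Z = z + 3%:Z by lia.
have -> : z - 1%:Z + 3%:Z = z + 2%:Z by lia.
have -> : z - 1%:Z + 2%:Z = z + 1%:Z by lia.
have -> : z - 1%:Z + 1%:Z = z by lia.
move=> ->.
rewrite cancel4.
by rewrite scalerA mulrC de scale1r.
Qed.

Lemma window (P : A -> Prop) (p q : A) m : subclosed P ->
  P (p * s ^ m * q) -> P (p * s ^ (m + 1%:Z) * q) ->
  P (p * s ^ (m + 2%:Z) * q) -> P (p * s ^ (m + 3%:Z) * q) ->
  forall z, P (p * s ^ z * q).
Proof.
move=> [P0 PD PZ] H0 H1 H2 H3.
pose Q z := P (p * s ^ z * q).
have PB : forall u v, P u -> P v -> P (u - v).
  by move=> u v Pu Pv; apply: (PD) => //; rewrite -scaleN1r; apply: (PZ).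
have up : forall n : nat, [/\ Q (m + n%:Z), Q (m + n%:Z + 1%:Z), Q (m + n%:Z + 2%:Z) & Q (m + n%:Z + 3%:Z)].
  elim=> [|n [Q0 Q1 Q2 Q3]].
    by rewrite addr0; split.
  have E1 : forall k : nat, m + n.+1%:Z + k%:Z = m + n%:Z + (k.+1)%:Z by move=> k; lia.
  have E0 : m + n.+1%:Z = m + n%:Z + 1%:Z by lia.
  rewrite !E1 E0; split => //.
  rewrite /Q stepup lin4; apply: (PD); [apply: (PD); [apply: (PD)|]|]; apply: (PZ) => //.
have dn : forall n : nat, [/\ Q (m - n%:Z), Q (m - n%:Z + 1%:Z), Q (m - n%:Z + 2%:Z) & Q (m - n%:Z + 3%:Z)].
  elim=> [|n [Q0 Q1 Q2 Q3]].
    by rewrite subr0; split.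
  have E1 : forall k : nat, m - n.+1%:Z + k.+2%:Z = m - n%:Z + k.+1%:Z by move=> k; lia.
  have E0 : m - n.+1%:Z + 1%:Z = m - n%:Z by lia.
  rewrite !E1 E0; split => //.
  have -> : m - n.+1%:Z = (m - n%:Z) - 1%:Z by lia.
  rewrite /Q stepdown -scalerAr -scalerAl; apply: (PZ).
  rewrite !mulrBr !mulrBl.
  rewrite -!scalerAr -!scalerAl.
  apply: (PB); [apply: (PB); [apply: (PB)|]|] => //; apply: (PZ) => //.
move=> z.
have [h|h] := lerP m z.
  have -> : z = m + (`|z - m|%N)%:Z by lia.
  by case: (up `|z - m|%N).
have -> : z = m - (`|z - m|%N)%:Z by lia.
by case: (dn `|z - m|%N).
Qed.


Lemma subalg_closed (t : A) : subclosed (subalg1 t).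
Proof.
split.
- by exists 0; rewrite rmorph0.
- by move=> u v [pu ->] [pv ->]; exists (pu + pv); rewrite rmorphD.
- move=> k u [pu ->]; exists (k *: pu). rewrite -mul_polyC rmorphM /= horner_algC mulr_algl. done.
Qed.

Lemma subalgX (t : A) (n : nat) : subalg1 t (t ^+ n).
Proof. by exists ('X ^+ n); rewrite rmorphXn /= horner_algX. Qed.

Lemma subalgM (t u v : A) : subalg1 t u -> subalg1 t v -> subalg1 t (u * v).
Proof. by move=> [pu ->] [pv ->]; exists (pu * pv); rewrite rmorphM. Qed.

Lemma subalg_z z : subalg1 s (s ^ z).
Proof.
rewrite -[s ^ z]mul1r -[_ * _]mulr1.
apply: (@window _ 1 1 0%:Z (subalg_closed s)); rewrite mulr1 mul1r;
  by [apply: subalgX | rewrite add0r; apply: subalgX].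
Qed.

Lemma poly_mono (P : A -> Prop) (t : A) (pl : {poly R}) : subclosed P ->
  forall p0 q0 : A, (forall n : nat, P (p0 * t ^+ n * q0)) -> P (p0 * horner_alg t pl * q0).
Proof.
move=> [P0 PD PZ]; elim/poly_ind: pl => [|pl k IH] p0 q0 H.
  by rewrite rmorph0 mulr0 mul0r.
rewrite rmorphD rmorphM /= horner_algX horner_algC mulrDr mulrDl.
apply: (PD).
  rewrite mulrA -(mulrA _ t).
  by apply: IH => n; rewrite mulrA -(mulrA _ _ t) -exprSr.
rewrite -scalerAr -scalerAl mulr1; apply: (PZ).
by have := H 0%N; rewrite expr0 mulr1.
Qed.
End Span.

Section Braid.
Variables (R : comNzRingType) (A : unitAlgType R).

Lemma wform (a b c r : A) : a * b * c = r -> forall w, w * a * b * c = w * r.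
Proof. by move=> <- w; rewrite !mulrA. Qed.

Lemma conjn (c u : A) : c \is a GRing.unit -> forall n : nat,
  c * u ^+ n * c^-1 = (c * u * c^-1) ^+ n.
Proof.
move=> cu; elim=> [|n IH]; first by rewrite !expr0 mulr1 mulrV.
by rewrite !exprSr -IH !mulrA mulrVK.
Qed.

Lemma conjz (c u v : A) : c \is a GRing.unit -> u \is a GRing.unit ->
  c * u * c^-1 = v -> forall z, c * u ^ z * c^-1 = v ^ z.
Proof.
move=> cu uu <- [n|n]; first by rewrite -!exprnP conjn.
rewrite /exprz -conjn // invrM ?unitrV ?invrK //; last by rewrite unitrMl ?unitrX.
by rewrite invrM ?unitrX // mulrA.
Qed.

Variables (x y : A).
Hypotheses (xu : x \is a GRing.unit) (yu : y \is a GRing.unit) (br : x * y * x = y * x * y).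

Lemma xyu : x * y \is a GRing.unit. Proof. by rewrite unitrMr. Qed.
Lemma xiu : x^-1 \is a GRing.unit. Proof. by rewrite unitrV. Qed.
Lemma yiu : y^-1 \is a GRing.unit. Proof. by rewrite unitrV. Qed.

Lemma yxu : y * x \is a GRing.unit. Proof. by rewrite unitrMr. Qed.

Lemma inv3 (p q r : A) : p \is a GRing.unit -> q \is a GRing.unit -> r \is a GRing.unit ->
  (p * q * r)^-1 = r^-1 * q^-1 * p^-1.
Proof. by move=> pu qu ru; rewrite invrM ?unitrMl // invrM // mulrA. Qed.

Lemma B1 : y^-1 * x * y = x * y * x^-1.
Proof.
apply: (mulIr xu); apply: (mulrI yu).
by rewrite !mulrA mulrV // mul1r mulrVK // br.
Qed.

Lemma B2 : x^-1 * y * x = y * x * y^-1.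
Proof.
apply: (mulIr yu); apply: (mulrI xu).
by rewrite !mulrA mulrV // mul1r mulrVK // br.
Qed.

Lemma B3 : (x * y) * x * (x * y)^-1 = y.
Proof. by apply: (mulIr xyu); rewrite mulrVK ?xyu // mulrA br. Qed.

Lemma B4 : (y * x) * y * (y * x)^-1 = x.
Proof. by apply: (mulIr yxu); rewrite mulrVK ?yxu // mulrA br. Qed.

Lemma D1 z : y^-1 * x ^ z * y = x * y ^ z * x^-1.
Proof.
have H := conjz yiu xu (v := x * y * x^-1); rewrite invrK in H.
rewrite H; last exact: B1.
by rewrite (conjz xu yu (erefl _)).
Qed.

Lemma D2 z : x^-1 * y ^ z * x = y * x ^ z * y^-1.
Proof.
have H := conjz xiu yu (v := y * x * y^-1); rewrite invrK in H.
rewrite H; last exact: B2.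
by rewrite (conjz yu xu (erefl _)).
Qed.

Lemma D3 z : x * y * x ^ z = y ^ z * x * y.
Proof.
have := conjz xyu xu B3 z => <-.
by rewrite -[RHS]mulrA mulrVK ?xyu.
Qed.

Lemma D4 z : y * x * y ^ z = x ^ z * y * x.
Proof.
have := conjz yxu yu B4 z => <-.
by rewrite -[RHS]mulrA mulrVK ?yxu.
Qed.

Lemma D5 z : y ^ z * x^-1 * y^-1 = x^-1 * y^-1 * x ^ z.
Proof.
have := congr1 (@GRing.inv _) (D4 (- z)).
by rewrite !inv3 ?unitrXz // !invr_expz opprK.
Qed.

Lemma D6 z : y^-1 * x^-1 * y ^ z = x ^ z * y^-1 * x^-1.
Proof.
have := congr1 (@GRing.inv _) (D3 (- z)).
by rewrite !inv3 ?unitrXz // !invr_expz opprK => <-.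
Qed.

Lemma E1 (t : A) : t ^ 1%:Z = t. Proof. exact: expr1z. Qed.
Lemma Em1 (t : A) : t ^ (- 1%:Z) = t^-1. Proof. by []. Qed.
Lemma E2 (t : A) : t ^ 2%:Z = t * t. Proof. by []. Qed.
Lemma Em2 (t : A) : t \is a GRing.unit -> t ^ (- 2%:Z) = t^-1 * t^-1.
Proof. by move=> tu; rewrite -invrM // -expr2. Qed.

Lemma D1m1 : y^-1 * x^-1 * y = x * y^-1 * x^-1.
Proof. by have := D1 (- 1%:Z). Qed.
Lemma D2s : y * x * y^-1 = x^-1 * y * x.
Proof. by rewrite B2. Qed.
Lemma D5_1 : y * x^-1 * y^-1 = x^-1 * y^-1 * x.
Proof. by have := D5 1%:Z; rewrite !E1. Qed.
Lemma D6m1 : y^-1 * x^-1 * y^-1 = x^-1 * y^-1 * x^-1.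
Proof. by have := D6 (- 1%:Z). Qed.

Lemma A1 i : y ^ i * x ^ 1%:Z * y ^ 1%:Z = x * y * x ^ i.
Proof. by rewrite !E1 D3. Qed.
Lemma A2 : y ^ 1%:Z * x ^ 1%:Z * y ^ (- 1%:Z) = x^-1 * y * x.
Proof. by rewrite !E1 Em1 D2s. Qed.
Lemma A3 : y ^ 2%:Z * x ^ 1%:Z * y ^ (- 1%:Z) = y * x^-1 * y * x.
Proof. by rewrite E1 Em1 E2 (wform D2s) !mulrA. Qed.
Lemma A4 : y ^ (- 2%:Z) * x ^ 1%:Z * y ^ 2%:Z = x * y * (x^-1 * x^-1) * y.
Proof. by rewrite E1 E2 Em2 // !mulrA (wform B1) !mulrA B1. Qed.
Lemma A5 : y ^ (- 1%:Z) * x ^ 1%:Z * y ^ 2%:Z = x * y * x^-1 * y.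
Proof. by rewrite E1 E2 Em1 !mulrA B1. Qed.
Lemma A6 : y ^ 1%:Z * x ^ 1%:Z * y ^ 2%:Z = x ^ 2%:Z * y * x.
Proof. by rewrite !E1 D4. Qed.

Lemma Bc1 i : y ^ i * x ^ (- 1%:Z) * y ^ (- 1%:Z) = x^-1 * y^-1 * x ^ i.
Proof. by rewrite !Em1 D5. Qed.
Lemma Bc2 : y ^ (- 2%:Z) * x ^ (- 1%:Z) * y ^ 1%:Z = y^-1 * x * y^-1 * x^-1.
Proof. by rewrite E1 !Em1 Em2 // (wform D1m1) !mulrA. Qed.
Lemma Bc3 : y ^ (- 1%:Z) * x ^ (- 1%:Z) * y ^ 1%:Z = x * y^-1 * x^-1.
Proof. by rewrite E1 !Em1 D1m1. Qed.
Lemma Bc4 : y ^ (- 2%:Z) * x ^ (- 1%:Z) * y ^ (- 2%:Z) = x^-1 * (y^-1 * (x^-1 * x^-1) * y^-1).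
Proof. by rewrite !Em2 // Em1 !mulrA (wform D6m1) !mulrA D6m1. Qed.
Lemma Bc5 : y ^ (- 1%:Z) * x ^ (- 1%:Z) * y ^ (- 2%:Z) = x ^ (- 2%:Z) * y^-1 * x^-1.
Proof. by rewrite !Em1 D6. Qed.
Lemma Bc6 : y ^ 1%:Z * x ^ (- 1%:Z) * y ^ (- 2%:Z) = x^-1 * (y^-1 * x * y^-1).
Proof. by rewrite E1 Em1 Em2 // !mulrA D5_1. Qed.

Lemma C1 : y ^ (- 2%:Z) * x ^ (- 2%:Z) * y ^ 1%:Z = y ^ (- 1%:Z) * x ^ 1%:Z * y ^ (- 2%:Z) * x^-1.
Proof. by rewrite E1 Em1 E1 (Em2 yu) (wform (D1 _)) !mulrA (Em2 yu) !mulrA. Qed.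
Lemma C2 : y ^ (- 1%:Z) * x ^ (- 2%:Z) * y ^ 1%:Z = x * y ^ (- 2%:Z) * x^-1.
Proof. by rewrite E1 Em1 D1. Qed.
Lemma C3 : y ^ 1%:Z * x ^ (- 2%:Z) * y ^ (- 1%:Z) = x^-1 * y ^ (- 2%:Z) * x.
Proof. by rewrite E1 Em1 -D2. Qed.
Lemma C4 : y ^ 2%:Z * x ^ (- 2%:Z) * y ^ (- 1%:Z) = x^-1 * (y^-1 * x * y^-1) * x.
Proof.
rewrite E2 Em1 (wform (esym (D2 _))) (Em2 yu) !mulrA.
by rewrite D5_1.
Qed.
Lemma C5 : y ^ (- 1%:Z) * x ^ (- 2%:Z) * y ^ (- 2%:Z) = x * (y ^ (- 2%:Z) * x^-1 * y ^ (- 3%:Z)).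
Proof.
have E : y ^ (- 2%:Z) = y * y ^ (- 3%:Z).
  by rewrite -[y in RHS]E1 -exprzDr.
by rewrite {1}E Em1 !mulrA D1.
Qed.
Lemma C6 : y ^ 1%:Z * x ^ (- 2%:Z) * y ^ (- 2%:Z) = x^-1 * (y ^ (- 2%:Z) * x * y^-1).
Proof.
by rewrite E1 {1}(Em2 yu) !mulrA -D2.
Qed.
End Braid.

Section Main.
Variables (R : comNzRingType) (A : unitAlgType R) (a b c d e : R) (s1 s2 : A).
Hypotheses (de : d * e = 1) (s1u : s1 \is a GRing.unit) (s2u : s2 \is a GRing.unit)
  (br : s1 * s2 * s1 = s2 * s1 * s2)
  (q1 : s1 ^+ 4 = a *: s1 ^+ 3 + b *: s1 ^+ 2 + c *: s1 + d%:A)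
  (q2 : s2 ^+ 4 = a *: s2 ^+ 3 + b *: s2 ^+ 2 + c *: s2 + d%:A).

Definition Vg (w : A) : Prop :=
  prod3 (subalg1 s1) (subalg1 s2) (subalg1 s1) w
  \/ sandwich (subalg1 s1) (s2 * s1^-1 * s2) (subalg1 s1) w
  \/ sandwich (subalg1 s1) (s2^-1 * s1 * s2^-1) (subalg1 s1) w
  \/ sandwich (subalg1 s1) (s2 * s1^-2 * s2) (subalg1 s1) w
  \/ sandwich (subalg1 s1) (s2^-2 * s1^-2 * s2^-2) (subalg1 s1) w.

Definition V := in_span Vg.
Definition U := U_mod s1 s2.

Lemma VU w : V w -> U w.
Proof.
apply: span_mono => x [H|[H|[H|[H|H]]]]; rewrite /U_gens; tauto.
Qed.

Lemma u1z z : subalg1 s1 (s1 ^ z). Proof. exact: subalg_z de s1u q1 z. Qed.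
Lemma u2z z : subalg1 s2 (s2 ^ z). Proof. exact: subalg_z de s2u q2 z. Qed.
Lemma u1one : subalg1 s1 1. Proof. exact: (u1z 0). Qed.
Lemma u1x : subalg1 s1 s1. Proof. exact: (u1z 1). Qed.
Lemma u1xi : subalg1 s1 s1^-1. Proof. exact: (u1z (- 1%:Z)). Qed.

Lemma T0e p q r w : subalg1 s1 p -> subalg1 s2 q -> subalg1 s1 r -> w = p * q * r -> V w.
Proof. by move=> Hp Hq Hr ->; apply: span_sub; left; exists p, q, r. Qed.
Lemma T1e p r w : subalg1 s1 p -> subalg1 s1 r -> w = p * (s2 * s1^-1 * s2) * r -> V w.
Proof. by move=> Hp Hr ->; apply: span_sub; right; left; exists p, r. Qed.
Lemma T2e p r w : subalg1 s1 p -> subalg1 s1 r -> w = p * (s2^-1 * s1 * s2^-1) * r -> V w.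
Proof. by move=> Hp Hr ->; apply: span_sub; right; right; left; exists p, r. Qed.
Lemma T4e p r w : subalg1 s1 p -> subalg1 s1 r -> w = p * (s2 * s1^-2 * s2) * r -> V w.
Proof. by move=> Hp Hr ->; apply: span_sub; right; right; right; left; exists p, r. Qed.
Lemma T5e p r w : subalg1 s1 p -> subalg1 s1 r -> w = p * (s2^-2 * s1^-2 * s2^-2) * r -> V w.
Proof. by move=> Hp Hr ->; apply: span_sub; right; right; right; right; exists p, r. Qed.
Lemma T3e p w : subalg1 s1 p -> w = p * (s2^-1 * s1^-2 * s2^-1) -> U w.
Proof. by move=> Hp ->; apply: span_sub; right; right; right; left; exists p. Qed.

Lemma Vmul p q w : subalg1 s1 p -> subalg1 s1 q -> V w -> V (p * w * q).
Proof.
move=> Hp Hq; apply: span_mul => v [[x [y [z [Hx Hy Hz ->]]]]|[[x [z [Hx Hz ->]]]|[[x [z [Hx Hz ->]]]|[[x [z [Hx Hz ->]]]|[x [z [Hx Hz ->]]]]]]].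
- by apply: (T0e (p := p * x) (q := y) (r := z * q)); rewrite ?mulrA //; apply: subalgM.
- by apply: (T1e (p := p * x) (r := z * q)); rewrite ?mulrA //; apply: subalgM.
- by apply: (T2e (p := p * x) (r := z * q)); rewrite ?mulrA //; apply: subalgM.
- by apply: (T4e (p := p * x) (r := z * q)); rewrite ?mulrA //; apply: subalgM.
- by apply: (T5e (p := p * x) (r := z * q)); rewrite ?mulrA //; apply: subalgM.
Qed.

Lemma Umul p w : subalg1 s1 p -> U w -> U (p * w).
Proof.
move=> Hp Uw; rewrite -[_ * w]mulr1; move: Uw; apply: span_mul => v.
rewrite /U_gens => -[[x [y [z [Hx Hy Hz ->]]]]|[[x [z [Hx Hz ->]]]|[[x [z [Hx Hz ->]]]|[[x [Hx ->]]|[[x [z [Hx Hz ->]]]|[x [z [Hx Hz ->]]]]]]]].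
- by apply: VU; apply: (T0e (p := p * x) (q := y) (r := z)); rewrite ?mulrA ?mulr1 //; apply: subalgM.
- by apply: VU; apply: (T1e (p := p * x) (r := z)); rewrite ?mulrA ?mulr1 //; apply: subalgM.
- by apply: VU; apply: (T2e (p := p * x) (r := z)); rewrite ?mulrA ?mulr1 //; apply: subalgM.
- by apply: (T3e (p := p * x)); rewrite ?mulrA ?mulr1 //; apply: subalgM.
- by apply: VU; apply: (T4e (p := p * x) (r := z)); rewrite ?mulrA ?mulr1 //; apply: subalgM.
- by apply: VU; apply: (T5e (p := p * x) (r := z)); rewrite ?mulrA ?mulr1 //; apply: subalgM.
Qed.


Lemma Vc : subclosed V. Proof. exact: span_closed. Qed.
Lemma Uc : subclosed U. Proof. exact: span_closed. Qed.

Lemma inv2 (t : A) : t \is a GRing.unit -> t ^- 2 = t^-1 * t^-1.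
Proof. by move=> tu; rewrite expr2 invrM. Qed.

Lemma iwin (P : A -> Prop) j k m : subclosed P ->
  P (s2 ^ m * s1 ^ j * s2 ^ k) -> P (s2 ^ (m + 1%:Z) * s1 ^ j * s2 ^ k) ->
  P (s2 ^ (m + 2%:Z) * s1 ^ j * s2 ^ k) -> P (s2 ^ (m + 3%:Z) * s1 ^ j * s2 ^ k) ->
  forall i, P (s2 ^ i * s1 ^ j * s2 ^ k).
Proof.
move=> cP H0 H1 H2 H3 i.
have E : forall z, s2 ^ z * s1 ^ j * s2 ^ k = 1 * s2 ^ z * (s1 ^ j * s2 ^ k).
  by move=> z; rewrite mul1r mulrA.
by rewrite E; apply: (window (m := m) de s2u q2 cP); rewrite -E.
Qed.

Lemma kwin (P : A -> Prop) i j m : subclosed P ->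
  P (s2 ^ i * s1 ^ j * s2 ^ m) -> P (s2 ^ i * s1 ^ j * s2 ^ (m + 1%:Z)) ->
  P (s2 ^ i * s1 ^ j * s2 ^ (m + 2%:Z)) -> P (s2 ^ i * s1 ^ j * s2 ^ (m + 3%:Z)) ->
  forall k, P (s2 ^ i * s1 ^ j * s2 ^ k).
Proof.
move=> cP H0 H1 H2 H3 k.
have E : forall z, s2 ^ i * s1 ^ j * s2 ^ z = (s2 ^ i * s1 ^ j) * s2 ^ z * 1.
  by move=> z; rewrite mulr1.
by rewrite E; apply: (window (m := m) de s2u q2 cP); rewrite -E.
Qed.

Lemma jwin (P : A -> Prop) i k m : subclosed P ->
  P (s2 ^ i * s1 ^ m * s2 ^ k) -> P (s2 ^ i * s1 ^ (m + 1%:Z) * s2 ^ k) ->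
  P (s2 ^ i * s1 ^ (m + 2%:Z) * s2 ^ k) -> P (s2 ^ i * s1 ^ (m + 3%:Z) * s2 ^ k) ->
  forall j, P (s2 ^ i * s1 ^ j * s2 ^ k).
Proof. by move=> cP H0 H1 H2 H3 j; apply: (window (m := m) de s1u q1 cP). Qed.

Lemma stepA i k : V (s2 ^ i * s1 ^ 1%:Z * s2 ^ k).
Proof.
have fA0 : forall i, V (s2 ^ i * s1 ^ 1%:Z * s2 ^ 0%:Z).
  move=> i'; apply: (T0e (p := 1) (q := s2 ^ i') (r := s1 ^ 1%:Z)) => //;
    [exact: u1one | exact: u2z | exact: u1z | by rewrite expr0z mulr1 mul1r].
have fA1 : forall i, V (s2 ^ i * s1 ^ 1%:Z * s2 ^ 1%:Z).
  move=> i'; apply: (T0e (p := s1) (q := s2) (r := s1 ^ i')) => //;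
    [exact: u1x | exact: (u2z 1) | exact: u1z | by rewrite (A1 s1u s2u br)].
move: k; apply: (kwin (m := - 1%:Z) Vc).
- move: i; apply: (iwin (m := - 1%:Z) Vc).
  + apply: (T2e (p := 1) (r := 1)); [exact: u1one | exact: u1one |].
    by rewrite mul1r mulr1 !Em1 E1.
  + apply: (T0e (p := s1 ^ 1%:Z) (q := s2 ^ (- 1%:Z)) (r := 1));
      [exact: u1z | exact: u2z | exact: u1one | by rewrite mulr1 expr0z mul1r].
  + apply: (T0e (p := s1^-1) (q := s2) (r := s1));
      [exact: u1xi | exact: (u2z 1) | exact: u1x | exact: (A2 s1u s2u br)].
  + apply: (T1e (p := 1) (r := s1)); [exact: u1one | exact: u1x |].
    by apply: (etrans (A3 s1u s2u br)); rewrite mul1r.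
- exact: fA0.
- exact: fA1.
- move: i; apply: (iwin (m := - 2%:Z) Vc).
  + apply: (T4e (p := s1) (r := 1)); [exact: u1x | exact: u1one |].
    by apply: (etrans (A4 s1u s2u br)); rewrite mulr1 inv2 // !mulrA.
  + apply: (T1e (p := s1) (r := 1)); [exact: u1x | exact: u1one |].
    by apply: (etrans (A5 s1u s2u br)); rewrite mulr1 !mulrA.
  + apply: (T0e (p := s1 ^ 1%:Z) (q := s2 ^ 2%:Z) (r := 1));
      [exact: u1z | exact: u2z | exact: u1one | by rewrite mulr1 expr0z mul1r].
  + apply: (T0e (p := s1 ^ 2%:Z) (q := s2) (r := s1));
      [exact: u1z | exact: (u2z 1) | exact: u1x | exact: (A6 s1u s2u br)].
Qed.

Lemma T0U p q r w : subalg1 s1 p -> subalg1 s2 q -> subalg1 s1 r -> w = p * q * r -> U w.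
Proof. by move=> Hp Hq Hr E; apply: VU; apply: (T0e Hp Hq Hr E). Qed.

Lemma stepB i k : U (s2 ^ i * s1 ^ (- 1%:Z) * s2 ^ k).
Proof.
move: k; apply: (kwin (m := - 2%:Z) Uc).
- move: i; apply: (iwin (m := - 2%:Z) Uc).
  + apply: (T3e (p := s1^-1)); first exact: u1xi.
    by apply: (etrans (Bc4 s1u s2u br)); rewrite inv2.
  + apply: (T0U (p := s1 ^ (- 2%:Z)) (q := s2^-1) (r := s1^-1));
      [exact: u1z | exact: (u2z (- 1%:Z)) | exact: u1xi | exact: (Bc5 s1u s2u br)].
  + apply: (T0U (p := s1 ^ (- 1%:Z)) (q := s2 ^ (- 2%:Z)) (r := 1));
      [exact: u1z | exact: u2z | exact: u1one | by rewrite mulr1 expr0z mul1r].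
  + apply: VU; apply: (T2e (p := s1^-1) (r := 1)); [exact: u1xi | exact: u1one |].
    by apply: (etrans (Bc6 s1u s2u br)); rewrite mulr1.
- apply: (T0U (p := s1^-1) (q := s2^-1) (r := s1 ^ i));
    [exact: u1xi | exact: (u2z (- 1%:Z)) | exact: u1z | exact: (Bc1 s1u s2u br)].
- apply: (T0U (p := 1) (q := s2 ^ i) (r := s1 ^ (- 1%:Z)));
    [exact: u1one | exact: u2z | exact: u1z | by rewrite expr0z mulr1 mul1r].
- move: i; apply: (iwin (m := - 2%:Z) Uc).
  + apply: VU; apply: (T2e (p := 1) (r := s1^-1)); [exact: u1one | exact: u1xi |].
    by apply: (etrans (Bc2 s1u s2u br)); rewrite mul1r.
  + apply: (T0U (p := s1) (q := s2^-1) (r := s1^-1));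
      [exact: u1x | exact: (u2z (- 1%:Z)) | exact: u1xi | exact: (Bc3 s1u s2u br)].
  + apply: (T0U (p := s1 ^ (- 1%:Z)) (q := s2) (r := 1));
      [exact: u1z | exact: (u2z 1) | exact: u1one | by rewrite mulr1 expr0z mul1r].
  + apply: VU; apply: (T1e (p := 1) (r := 1)); [exact: u1one | exact: u1one |].
    by rewrite mul1r mulr1.
Qed.

Lemma stepC i k : U (s2 ^ i * s1 ^ (- 2%:Z) * s2 ^ k).
Proof.
move: k; apply: (kwin (m := - 2%:Z) Uc).
- move: i; apply: (iwin (m := - 2%:Z) Uc).
  + apply: VU; apply: (T5e (p := 1) (r := 1)); [exact: u1one | exact: u1one |].
    by rewrite mul1r mulr1.
  + change (U (s2 ^ (- 1%:Z) * s1 ^ (- 2%:Z) * s2 ^ (- 2%:Z))).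
    rewrite (C5 s1u s2u br); exact: (Umul u1x (stepB (- 2%:Z) (- 3%:Z))).
  + apply: (T0U (p := s1 ^ (- 2%:Z)) (q := s2 ^ (- 2%:Z)) (r := 1));
      [exact: u1z | exact: u2z | exact: u1one | by rewrite mulr1 expr0z mul1r].
  + change (U (s2 ^ 1%:Z * s1 ^ (- 2%:Z) * s2 ^ (- 2%:Z))).
    rewrite (C6 s1u s2u br); exact: (Umul u1xi (VU (stepA (- 2%:Z) (- 1%:Z)))).
- move: i; apply: (iwin (m := - 1%:Z) Uc).
  + by apply: (T3e (p := 1)); [exact: u1one | rewrite mul1r].
  + apply: (T0U (p := s1 ^ (- 2%:Z)) (q := s2 ^ (- 1%:Z)) (r := 1));
      [exact: u1z | exact: u2z | exact: u1one | by rewrite mulr1 expr0z mul1r].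
  + apply: (T0U (p := s1^-1) (q := s2 ^ (- 2%:Z)) (r := s1));
      [exact: u1xi | exact: u2z | exact: u1x | exact: (C3 s1u s2u br)].
  + apply: VU; apply: (T2e (p := s1^-1) (r := s1)); [exact: u1xi | exact: u1x |].
    exact: (C4 s1u s2u br).
- apply: (T0U (p := 1) (q := s2 ^ i) (r := s1 ^ (- 2%:Z)));
    [exact: u1one | exact: u2z | exact: u1z | by rewrite expr0z mulr1 mul1r].
- move: i; apply: (iwin (m := - 2%:Z) Uc).
  + change (U (s2 ^ (- 2%:Z) * s1 ^ (- 2%:Z) * s2 ^ 1%:Z)).
    rewrite (C1 s1u s2u br); have := VU (Vmul u1one u1xi (stepA (- 1%:Z) (- 2%:Z))).
    by rewrite mul1r.
  + apply: (T0U (p := s1) (q := s2 ^ (- 2%:Z)) (r := s1^-1));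
      [exact: u1x | exact: u2z | exact: u1xi | exact: (C2 s1u s2u br)].
  + apply: (T0U (p := s1 ^ (- 2%:Z)) (q := s2) (r := 1));
      [exact: u1z | exact: (u2z 1) | exact: u1one | by rewrite mulr1 expr0z mul1r].
  + apply: VU; apply: (T4e (p := 1) (r := 1)); [exact: u1one | exact: u1one |].
    by rewrite mul1r mulr1.
Qed.

Lemma stepD i j k : U (s2 ^ i * s1 ^ j * s2 ^ k).
Proof.
move: j; apply: (jwin (m := - 2%:Z) Uc).
- exact: stepC.
- exact: stepB.
- change (U (s2 ^ i * s1 ^ 0%:Z * s2 ^ k)).
  apply: (T0U (p := 1) (q := s2 ^ (i + k)) (r := 1));
    [exact: u1one | exact: u2z | exact: u1one |].
  by rewrite expr0z mulr1 mul1r mulr1 exprzDr.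
- change (U (s2 ^ i * s1 ^ 1%:Z * s2 ^ k)); exact: VU (stepA i k).
Qed.

Lemma main w : u2u1u2 s1 s2 w -> U w.
Proof.
apply: span_ind; first exact: Uc.
move=> v [p [q [r [[P1 ->] [Q ->] [P2 ->] ->]]]].
rewrite -mulrA -(mul1r (horner_alg s2 P1)).
apply: (poly_mono _ Uc) => n; rewrite mul1r mulrA.
apply: (poly_mono _ Uc) => m.
rewrite -[_ * horner_alg s2 P2]mulr1.
apply: (poly_mono _ Uc) => l; rewrite mulr1.
exact: (stepD n m l).
Qed.
End Main.

Theorem proposition3p2 (R : comNzRingType) (A : unitAlgType R)
    (a b c d : R) (s1 s2 : A) :
  (exists e : R, d * e = 1) ->
  s1 \is a GRing.unit -> s2 \is a GRing.unit ->
  s1 * s2 * s1 = s2 * s1 * s2 ->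
  s1 ^+ 4 = a *: s1 ^+ 3 + b *: s1 ^+ 2 + c *: s1 + d%:A ->
  s2 ^+ 4 = a *: s2 ^+ 3 + b *: s2 ^+ 2 + c *: s2 + d%:A ->
  forall w : A, u2u1u2 s1 s2 w -> U_mod s1 s2 w.
Proof.
move=> [e de] s1u s2u br q1 q2 w Hw.
exact: (main de s1u s2u br q1 q2 Hw).
Qed.
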